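(* Let $\Gamma=([n],w)$ be a hypergraph with non-negative weights, $\rho\colon\mathrm{U}(n)\to\mathrm{U}(V)$ a finite-dimensional unitary representation, and $V'=\mathrm{TorInv}(\rho)^\perp$, which is invariant under ${\cal L}(\Gamma,\rho)$. Then every eigenvalue of the restriction of ${\cal L}(\Gamma,\rho)$ to $V'$ is at least $\phi(\Gamma)=\min_{i\in[n]}\sum_{B\ni i}w_B$.
   Context: A weighted hypergraph $\Gamma=([n],w)$ assigns $w_B\ge0$ to every $B\subseteq[n]$. $\mathrm{U}_B\le\mathrm{U}(n)$ is the subgroup of unitaries coinciding with the identity outside the minor indexed by $B$, with Haar probability measure $\mu_B$; ${\cal L}(\Gamma,\rho)=\sum_Bw_B[I-\int_{\mathrm{U}_B}\rho(A)d\mu_B(A)]$. $T_n$ is the diagonal subgroup of $\mathrm{U}(n)$ and $\mathrm{TorInv}(\rho)$ the subspace of vectors fixed by $\rho(T_n)$. *)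

(* Defs.v *)
From HB Require Import structures.
From mathcomp Require Import all_boot all_order all_algebra.
From mathcomp Require Import complex reals.
Set Implicit Arguments. Unset Strict Implicit. Unset Printing Implicit Defensive.
Import Order.TTheory GRing.Theory Num.Theory.
Local Open Scope ring_scope.
Local Open Scope complex_scope.

Section HypergraphLaplacian.
Variable R : realType.
Local Notation C := R[i].

Definition adj m k (A : 'M[C]_(m, k)) : 'M[C]_(k, m) := (map_mx Num.conj A)^T.

Definition unitary n (A : 'M[C]_n) : Prop := A *m adj A = 1%:M.

Definition UB n (B : {set 'I_n}) (A : 'M[C]_n) : Prop :=
  unitary A /\ (forall i j : 'I_n, (i \notin B) || (j \notin B) -> A i j = (i == j)%:R).

Definition torus n (A : 'M[C]_n) : Prop := unitary A /\ is_diag_mx A.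

Definition cont_on n (G : 'M[C]_n -> Prop) (f : 'M[C]_n -> C) : Prop :=
  forall A, G A -> forall e : C, 0 < e -> exists2 d : C, 0 < d &
    forall A', G A' -> (forall i j, `|A' i j - A i j| < d) -> `|f A' - f A| < e.

(* I is the Haar (probability) integral on the compact group G, viewed as a
   functional on continuous functions: linear, local to G, positive,
   normalized, left-invariant.  By the Riesz and Haar uniqueness theorems this
   is exactly integration against the Haar probability measure. *)
Definition haar_integral n (G : 'M[C]_n -> Prop) (I : ('M[C]_n -> C) -> C) : Prop :=
  [/\ (forall f g, cont_on G f -> cont_on G g -> forall a b : C,
          I (fun A => a * f A + b * g A) = a * I f + b * I g),
      (forall f g, (forall A, G A -> f A = g A) -> I f = I g),
      (forall f, cont_on G f -> (forall A, G A -> 0 <= f A) -> 0 <= I f),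
      I (fun _ => 1) = 1 &
      (forall f g0, cont_on G f -> G g0 -> I (fun A => f (g0 *m A)) = I f)].

Definition unitary_rep n m (rho : 'M[C]_n -> 'M[C]_m) : Prop :=
  [/\ (forall A B, unitary A -> unitary B -> rho (A *m B) = rho A *m rho B),
      rho 1%:M = 1%:M,
      (forall A, unitary A -> unitary (rho A)) &
      (forall i j, cont_on (@unitary n) (fun A => rho A i j))].

Definition avg_op n m (rho : 'M[C]_n -> 'M[C]_m) (I : ('M[C]_n -> C) -> C)
  : 'M[C]_m := \matrix_(i, j) I (fun A => rho A i j).

Definition laplacian n m (w : {set 'I_n} -> R) (rho : 'M[C]_n -> 'M[C]_m)
  (I : {set 'I_n} -> ('M[C]_n -> C) -> C) : 'M[C]_m :=
  \sum_(B : {set 'I_n}) (w B)%:C *: (1%:M - avg_op rho (I B)).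

Definition TorInv n m (rho : 'M[C]_n -> 'M[C]_m) (v : 'cV[C]_m) : Prop :=
  forall t, torus t -> rho t *m v = v.
Definition TorInvPerp n m (rho : 'M[C]_n -> 'M[C]_m) (v : 'cV[C]_m) : Prop :=
  forall u, TorInv rho u -> adj u *m v = 0.

(* phi(Gamma) = min_i sum_{B \ni i} w_B  (the default value, the total weight,
   is an upper bound of every term, so this is the true minimum for n >= 1) *)
Definition phi n (w : {set 'I_n} -> R) : R :=
  \big[Num.min/ \sum_(B : {set 'I_n}) w B]_(i < n) \sum_(B : {set 'I_n} | i \in B) w B.

End HypergraphLaplacian.

(* Main.v *)
Require Import Defs.
From HB Require Import structures.
From mathcomp Require Import all_boot all_order all_algebra.
From mathcomp Require Import complex reals.
From mathcomp Require Import ring.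
Set Implicit Arguments. Unset Strict Implicit. Unset Printing Implicit Defensive.
Import Order.TTheory GRing.Theory Num.Theory.
Local Open Scope ring_scope.
Local Open Scope complex_scope.

Section Adj.
Variable R : realType.
Local Notation C := R[i].

Lemma adjM m k p (A : 'M[C]_(m, k)) (B : 'M[C]_(k, p)) :
  adj (A *m B) = adj B *m adj A.
Proof. by rewrite /adj (map_mxM Num.conj) trmx_mul. Qed.

Lemma adjK m k (A : 'M[C]_(m, k)) : adj (adj A) = A.
Proof. by apply/matrixP=> i j; rewrite /adj !mxE conjCK. Qed.

Lemma adjD m k (A B : 'M[C]_(m, k)) : adj (A + B) = adj A + adj B.
Proof. by apply/matrixP=> i j; rewrite /adj !mxE rmorphD. Qed.

Lemma adjN m k (A : 'M[C]_(m, k)) : adj (- A) = - adj A.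
Proof. by apply/matrixP=> i j; rewrite /adj !mxE rmorphN. Qed.

Lemma adjB m k (A B : 'M[C]_(m, k)) : adj (A - B) = adj A - adj B.
Proof. by rewrite adjD adjN. Qed.

Lemma adjZ m k a (A : 'M[C]_(m, k)) : adj (a *: A) = a^* *: adj A.
Proof. by apply/matrixP=> i j; rewrite /adj !mxE rmorphM. Qed.

Lemma adj1 m : adj (1%:M : 'M[C]_m) = 1%:M.
Proof. by apply/matrixP=> i j; rewrite /adj !mxE eq_sym; case: (i == j); rewrite /= ?conjC1 ?conjC0. Qed.

Lemma adj0 m k : adj (0 : 'M[C]_(m, k)) = 0.
Proof. by apply/matrixP=> i j; rewrite /adj !mxE conjC0. Qed.

Definition ip m (x y : 'cV[C]_m) : C := (adj x *m y) 0 0.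

Lemma ipE m (x y : 'cV[C]_m) : ip x y = \sum_k (x k 0)^* * y k 0.
Proof. by rewrite /ip mxE; apply: eq_bigr => k _; rewrite /adj !mxE. Qed.

Lemma ip_ge0 m (x : 'cV[C]_m) : 0 <= ip x x.
Proof. rewrite ipE; apply: sumr_ge0 => k _; rewrite mulrC; exact: mul_conjC_ge0. Qed.

Lemma ip_eq0 m (x : 'cV[C]_m) : ip x x = 0 -> x = 0.
Proof.
rewrite ipE => h; apply/matrixP=> k j; rewrite (ord1 j) mxE.
have h0 : forall k : 'I_m, true -> 0 <= (x k 0)^* * x k 0.
  by move=> l _; rewrite mulrC; exact: mul_conjC_ge0.
have := psumr_eq0P h0 h (erefl true).
move=> h1; apply/eqP; rewrite -mul_conjC_eq0 mulrC; exact/eqP.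
Qed.

Lemma ipDr m (x y z : 'cV[C]_m) : ip x (y + z) = ip x y + ip x z.
Proof. by rewrite /ip mulmxDr mxE. Qed.
Lemma ipDl m (x y z : 'cV[C]_m) : ip (y + z) x = ip y x + ip z x.
Proof. by rewrite /ip adjD mulmxDl mxE. Qed.
Lemma ipNr m (x y : 'cV[C]_m) : ip x (- y) = - ip x y.
Proof. by rewrite /ip mulmxN mxE. Qed.
Lemma ipNl m (x y : 'cV[C]_m) : ip (- y) x = - ip y x.
Proof. by rewrite /ip adjN mulNmx mxE. Qed.
Lemma ipBr m (x y z : 'cV[C]_m) : ip x (y - z) = ip x y - ip x z.
Proof. by rewrite ipDr ipNr. Qed.
Lemma ipBl m (x y z : 'cV[C]_m) : ip (y - z) x = ip y x - ip z x.
Proof. by rewrite ipDl ipNl. Qed.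
Lemma ipZr m a (x y : 'cV[C]_m) : ip x (a *: y) = a * ip x y.
Proof. by rewrite /ip -scalemxAr mxE. Qed.
Lemma ipMr m (A : 'M[C]_m) (x y : 'cV[C]_m) : ip x (A *m y) = ip (adj A *m x) y.
Proof. by rewrite /ip adjM adjK mulmxA. Qed.
Lemma ip0r m (x : 'cV[C]_m) : ip x 0 = 0.
Proof. by rewrite /ip mulmx0 mxE. Qed.
Lemma ip0l m (x : 'cV[C]_m) : ip 0 x = 0.
Proof. by rewrite /ip adj0 mul0mx mxE. Qed.
Lemma ipC m (x y : 'cV[C]_m) : ip y x = (ip x y)^*.
Proof.
rewrite !ipE (rmorph_sum Num.conj); apply: eq_bigr => k _.
by rewrite (rmorphM Num.conj) /= conjCK mulrC. Qed.

Lemma ip_sumr m (I : finType) (P : pred I) (x : 'cV[C]_m) (F : I -> 'cV[C]_m) :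
  ip x (\sum_(i | P i) F i) = \sum_(i | P i) ip x (F i).
Proof.
rewrite /ip mulmx_sumr summxE; exact: eq_bigr.
Qed.

Lemma vec_ext m (x y : 'cV[C]_m) : (forall f, ip f x = ip f y) -> x = y.
Proof.
move=> h; apply/eqP; rewrite -subr_eq0; apply/eqP; apply: ip_eq0.
by rewrite ipBr h subrr.
Qed.

Lemma mx_ext m k (A B : 'M[C]_(m, k)) : (forall y : 'cV[C]_k, A *m y = B *m y) -> A = B.
Proof.
move=> h; apply/matrixP=> i j.
have := congr1 (fun M : 'cV[C]_m => M i 0) (h (delta_mx j 0)).
by rewrite -!colE !mxE.
Qed.


Section Cont.
Variable n : nat.
Variable G : 'M[C]_n -> Prop.

Lemma cont_cst c : cont_on G (fun _ => c).
Proof. by move=> A _ e e0; exists 1 => // A' _ _; rewrite subrr normr0. Qed.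

Lemma cont_scale a f : cont_on G f -> cont_on G (fun A => a * f A).
Proof.
move=> hf A GA e e0.
have a1 : 0 < `|a| + 1 by rewrite ltr_pwDr.
have [d d0 hd] := hf A GA (e / (`|a| + 1)) (divr_gt0 e0 a1).
exists d => // A' GA' hA'.
rewrite -mulrBr normrM.
have h := hd A' GA' hA'.
apply: (le_lt_trans (y := (`|a| + 1) * `|f A' - f A|)).
  by rewrite ler_wpM2r // lerDl.
by rewrite mulrC -ltr_pdivlMr.
Qed.

Lemma cont_add f g : cont_on G f -> cont_on G g -> cont_on G (fun A => f A + g A).
Proof.
move=> hf hg A GA e e0.
have e2 : 0 < e / 2 by rewrite divr_gt0.
have [d1 d10 hd1] := hf A GA _ e2.
have [d2 d20 hd2] := hg A GA _ e2.
have s0 : 0 < d1 + d2 by rewrite addr_gt0.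
exists (d1 * d2 / (d1 + d2)); first by rewrite divr_gt0 // mulr_gt0.
move=> A' GA' hA'.
have le1 : d1 * d2 / (d1 + d2) <= d1.
  by rewrite ler_pdivrMr // ler_pM2l // lerDr ltW.
have le2 : d1 * d2 / (d1 + d2) <= d2.
  by rewrite ler_pdivrMr // mulrC ler_pM2l // lerDl ltW.
have h1 := hd1 A' GA' (fun i j => lt_le_trans (hA' i j) le1).
have h2 := hd2 A' GA' (fun i j => lt_le_trans (hA' i j) le2).
rewrite opprD addrACA.
apply: (le_lt_trans (ler_normD _ _)).
by rewrite [e]splitr ltrD.
Qed.

Lemma cont_lin a b f g : cont_on G f -> cont_on G g ->
  cont_on G (fun A => a * f A + b * g A).
Proof. by move=> hf hg; apply: cont_add; apply: cont_scale. Qed.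

Lemma cont_ext f g : (forall A, G A -> f A = g A) -> cont_on G f -> cont_on G g.
Proof.
move=> efg hf A GA e e0; have [d d0 hd] := hf A GA e e0.
by exists d => // A' GA' h; rewrite -!efg //; exact: hd.
Qed.

Lemma cont_sum (J : finType) (F : J -> 'M[C]_n -> C) :
  (forall j, cont_on G (F j)) -> cont_on G (fun A => \sum_j F j A).
Proof.
move=> hF.
have : forall s : seq J, cont_on G (fun A => \sum_(j <- s) F j A).
  elim=> [|j s IH].
    by apply: (cont_ext (f := fun _ => 0)) (cont_cst 0) => A _; rewrite big_nil.
  apply: (cont_ext (f := fun A => F j A + \sum_(j <- s) F j A)) (cont_add _ IH) => //.
  by move=> A _; rewrite big_cons.
by move/(_ (index_enum J)).
Qed.

Lemma cont_sub (H : 'M[C]_n -> Prop) f : (forall A, G A -> H A) -> cont_on H f -> cont_on G f.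
Proof.
move=> GH hf A GA e e0; have [d d0 hd] := hf A (GH A GA) e e0.
by exists d => // A' GA' h; apply: hd => //; exact: GH.
Qed.

Variable I : ('M[C]_n -> C) -> C.
Hypothesis hI : haar_integral G I.

Lemma I_cst c : I (fun _ => c) = c.
Proof.
case: hI => hlin hloc _ h1 _.
have e := hlin (fun _ => 1) (fun _ => 1) (cont_cst 1) (cont_cst 1) c 0.
rewrite h1 mul0r !addr0 mulr1 in e.
exact: e.
Qed.

Lemma I_sum (J : finType) (c : J -> C) (F : J -> 'M[C]_n -> C) :
  (forall j, cont_on G (F j)) ->
  I (fun A => \sum_j c j * F j A) = \sum_j c j * I (F j).
Proof.
case: hI => hlin hloc _ h1 _ hF.
have : forall s : seq J, cont_on G (fun A => \sum_(j <- s) c j * F j A) /\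
    I (fun A => \sum_(j <- s) c j * F j A) = \sum_(j <- s) c j * I (F j).
  elim=> [|j s [IHc IH]].
    split.
      by apply: (cont_ext (f := fun _ => 0)) (cont_cst 0) => A _; rewrite big_nil.
    rewrite big_nil; transitivity (I (fun _ => 0)); last exact: I_cst.
    by apply: hloc => A _; rewrite big_nil.
  split.
    apply: (cont_ext (f := fun A => c j * F j A + \sum_(j <- s) c j * F j A)).
      by move=> A _; rewrite big_cons.
    by apply: cont_add => //; apply: cont_scale.
  rewrite big_cons -IH.
  have := hlin _ _ (hF j) IHc (c j) 1.
  rewrite mul1r => <-.
  by apply: hloc => A _; rewrite big_cons mul1r.
by case/(_ (index_enum J)).
Qed.

End Cont.


Section Proj.
Variables (m : nat) (F : 'cV[C]_m -> Prop) (P : 'M[C]_m).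
Hypotheses (FB : forall a b, F a -> F b -> F (a - b))
  (PF : forall u, F (P *m u)) (Pip : forall f u, F f -> ip f (P *m u) = ip f u).

Lemma proj_uniq z u : F z -> (forall f, F f -> ip f z = ip f u) -> z = P *m u.
Proof.
move=> Fz hz; apply/eqP; rewrite -subr_eq0; apply/eqP; apply: ip_eq0.
have Fd := FB Fz (PF u).
by rewrite ipBr hz // Pip // subrr.
Qed.

Lemma proj_id f : F f -> P *m f = f.
Proof. by move=> Ff; symmetry; apply: proj_uniq. Qed.

Lemma proj_idem : P *m P = P.
Proof. by apply: mx_ext => y; rewrite -mulmxA proj_id. Qed.

Lemma proj_sym a b : ip a (P *m b) = ip (P *m a) b.
Proof.
have e1 := Pip b (PF a).
have e2 := Pip a (PF b).
by rewrite -e1 (ipC (P *m b) a) -e2 -ipC.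
Qed.

Lemma proj_adj : adj P = P.
Proof.
apply: mx_ext => x; apply: vec_ext => y.
by rewrite ipMr adjK proj_sym.
Qed.

End Proj.


Lemma unitaryV k (A : 'M[C]_k) : unitary A -> adj A *m A = 1%:M.
Proof. exact: mulmx1C. Qed.

Lemma ip_expand m (x y : 'cV[C]_m) (M : 'M[C]_m) :
  ip x (M *m y) = \sum_(p : 'I_m * 'I_m) ((x p.1 0)^* * y p.2 0) * M p.1 p.2.
Proof.
rewrite ipE -(pair_bigA _ (fun k l => (x k 0)^* * y l 0 * M k l)) /=; apply: eq_bigr => k _; rewrite mxE mulr_sumr.
by apply: eq_bigr => l _; ring.
Qed.

Section Rep.
Variables (n m : nat) (rho : 'M[C]_n -> 'M[C]_m).
Hypothesis hrho : unitary_rep rho.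

Lemma rhoM A B : unitary A -> unitary B -> rho (A *m B) = rho A *m rho B.
Proof. by case: hrho => h _ _ _; exact: h. Qed.
Lemma rho_unitary A : unitary A -> unitary (rho A).
Proof. by case: hrho => _ _ h _; exact: h. Qed.
Lemma UB_unitary B A : @UB R n B A -> unitary A.
Proof. by case. Qed.
Lemma cont_rho B i j : cont_on (@UB R n B) (fun A => rho A i j).
Proof. by case: hrho => _ _ _ h; apply: cont_sub (h i j); exact: UB_unitary. Qed.

Lemma cont_ipM B x y : cont_on (@UB R n B) (fun A => ip x (rho A *m y)).
Proof.
apply: (cont_ext (f := fun A => \sum_(p : 'I_m * 'I_m) ((x p.1 0)^* * y p.2 0) * rho A p.1 p.2)).
  by move=> A _; rewrite ip_expand.
by apply: cont_sum => p; apply: cont_scale; exact: cont_rho.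
Qed.

Definition Fix B (u : 'cV[C]_m) := forall g, @UB R n B g -> rho g *m u = u.

Lemma FixB B a b : Fix B a -> Fix B b -> Fix B (a - b).
Proof. by move=> ha hb g hg; rewrite mulmxBr ha // hb. Qed.

Lemma Fix_adj B f g : Fix B f -> @UB R n B g -> adj (rho g) *m f = f.
Proof.
move=> hf hg; rewrite -{1}(hf g hg) mulmxA unitaryV ?mul1mx //.
by apply: rho_unitary; exact: UB_unitary hg.
Qed.

Variable B : {set 'I_n}.
Variable I : ('M[C]_n -> C) -> C.
Hypothesis hI : haar_integral (@UB R n B) I.

Local Notation P := (avg_op rho I).

Lemma ipP x y : ip x (P *m y) = I (fun A => ip x (rho A *m y)).
Proof.
have [_ hloc _ _ _] := hI.
rewrite ip_expand.
transitivity (I (fun A => \sum_(p : 'I_m * 'I_m) ((x p.1 0)^* * y p.2 0) * rho A p.1 p.2)).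
  rewrite (I_sum hI) //; last by move=> p; exact: cont_rho.
  by apply: eq_bigr => p _; rewrite mxE.
by apply: hloc => A _; rewrite ip_expand.
Qed.

Lemma rhoP g : @UB R n B g -> rho g *m P = P.
Proof.
move=> hg; have [_ hloc _ _ hinv] := hI.
apply: mx_ext => y; apply: vec_ext => x.
rewrite -mulmxA ipMr !ipP.
transitivity (I (fun A => (fun A => ip x (rho A *m y)) (g *m A))).
  apply: hloc => A hA /=.
  rewrite (rhoM (UB_unitary hg) (UB_unitary hA)).
  by rewrite -mulmxA -ipMr.
exact: (hinv (fun A => ip x (rho A *m y)) g (cont_ipM x y) hg).
Qed.

Lemma Fix_P u : Fix B (P *m u).
Proof. by move=> g hg; rewrite mulmxA rhoP. Qed.

Lemma ip_Fix f u : Fix B f -> ip f (P *m u) = ip f u.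
Proof.
move=> hf; have [_ hloc _ _ _] := hI.
rewrite ipP; transitivity (I (fun _ => ip f u)); last exact: (I_cst hI).
by apply: hloc => A hA; rewrite ipMr (Fix_adj hf hA).
Qed.

Lemma P_adj : adj P = P.
Proof. exact: (proj_adj Fix_P ip_Fix). Qed.
Lemma P_idem : P *m P = P.
Proof. exact: (proj_idem (@FixB B) Fix_P ip_Fix). Qed.
Lemma P_id f : Fix B f -> P *m f = f.
Proof. exact: (proj_id (@FixB B) Fix_P ip_Fix). Qed.
Lemma P_uniq z u : Fix B z -> (forall f, Fix B f -> ip f z = ip f u) -> z = P *m u.
Proof. exact: (proj_uniq (@FixB B) Fix_P ip_Fix). Qed.

End Rep.


Lemma unitary_diag k (e : 'rV[C]_k) : (forall a, e 0 a * (e 0 a)^* = 1) -> unitary (diag_mx e).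
Proof.
move=> he; rewrite /unitary /adj mul_diag_mx; apply/matrixP => a b; rewrite !mxE.
case: (eqVneq a b) => [<-|ab]; first by rewrite !mulr1n he.
by rewrite !mulr0n conjC0 mulr0.
Qed.

Lemma UB1_diag n i (s : 'M[C]_n) : @UB R n [set i] s -> s = diag_mx (\row_k s k k).
Proof.
case=> _ h; apply/matrixP => a b; rewrite !mxE.
case: (eqVneq a b) => [<-|ab]; first by rewrite mulr1n.
rewrite mulr0n h ?(negbTE ab) //.
case: (eqVneq a i) => [ai|ai]; last by rewrite in_set1 ai.
by rewrite orbC in_set1 -ai eq_sym ab.
Qed.

Lemma UB1_comm n i j (s t : 'M[C]_n) : @UB R n [set i] s -> @UB R n [set j] t ->
  s *m t = t *m s.
Proof. by move=> hs ht; rewrite (UB1_diag hs) (UB1_diag ht) diag_mxC. Qed.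

Lemma UB_sub n i (B : {set 'I_n}) (s : 'M[C]_n) : i \in B -> @UB R n [set i] s -> @UB R n B s.
Proof.
move=> iB [hu h]; split=> // a b hab; apply: h.
case/orP: hab => hn; apply/orP; [left|right]; rewrite in_set1;
  by apply/eqP => e; move: hn; rewrite e iB.
Qed.

Section Circ.
Variables (n m : nat) (rho : 'M[C]_n -> 'M[C]_m).
Hypothesis hrho : unitary_rep rho.
Variable I : {set 'I_n} -> ('M[C]_n -> C) -> C.
Hypothesis hI : forall B, haar_integral (@UB R n B) (I B).

Local Notation Q i := (avg_op rho (I [set i])).
Local Notation Fx i := (Fix rho [set i]).

Lemma rho_comm i j s t : @UB R n [set i] s -> @UB R n [set j] t ->
  rho s *m rho t = rho t *m rho s.
Proof.
move=> hs ht.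
by rewrite -(rhoM hrho (UB_unitary hs) (UB_unitary ht)) -(rhoM hrho (UB_unitary ht) (UB_unitary hs)) (UB1_comm hs ht).
Qed.

Lemma Fix_rho i j t f : @UB R n [set j] t -> Fx i f -> Fx i (rho t *m f).
Proof. by move=> ht hf s hs; rewrite mulmxA (rho_comm hs ht) -mulmxA hf. Qed.

Lemma Fix_adj_rho i j t f : @UB R n [set j] t -> Fx i f -> Fx i (adj (rho t) *m f).
Proof.
move=> ht hf s hs.
have U := rho_unitary hrho (UB_unitary ht).
have V := unitaryV U.
have e : rho t *m (rho s *m (adj (rho t) *m f)) = f.
  by rewrite mulmxA -(rho_comm hs ht) -mulmxA (mulmxA (rho t)) U mul1mx hf.
by rewrite -[LHS]mul1mx -V -mulmxA e.
Qed.

Lemma Q_rho i j t : @UB R n [set j] t -> Q i *m rho t = rho t *m Q i.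
Proof.
move=> ht; apply: mx_ext => u; rewrite -!mulmxA; symmetry.
apply: (P_uniq hrho (hI [set i])).
  exact: (Fix_rho ht (Fix_P hrho (hI [set i]) u)).
move=> f hf; rewrite ipMr (ip_Fix hrho (hI [set i])); last exact: (Fix_adj_rho ht hf).
by rewrite -ipMr.
Qed.

Lemma Fix_Q i j f : Fx i f -> Fx i (Q j *m f).
Proof.
move=> hf s hs; rewrite mulmxA -(Q_rho j hs) -mulmxA hf //.
Qed.

Lemma Q_comm i j : Q i *m Q j = Q j *m Q i.
Proof.
apply: mx_ext => u; rewrite -!mulmxA; symmetry.
apply: (P_uniq hrho (hI [set i])).
  exact: (Fix_Q j (Fix_P hrho (hI [set i]) u)).
move=> f hf; rewrite ipMr (P_adj hrho (hI [set j])).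
rewrite (ip_Fix hrho (hI [set i])); last exact: (Fix_Q j hf).
by rewrite [RHS]ipMr (P_adj hrho (hI [set j])).
Qed.

Lemma Q_P i (B : {set 'I_n}) : i \in B -> Q i *m avg_op rho (I B) = avg_op rho (I B).
Proof.
move=> iB; apply: mx_ext => u; rewrite -mulmxA.
apply: (P_id hrho (hI [set i])) => s hs.
by apply: (Fix_P hrho (hI B)); exact: UB_sub hs.
Qed.


Lemma Q_tor u : (forall i, Q i *m u = u) -> TorInv rho u.
Proof.
move=> hu t [ht /diag_mxP [d td]].
have hd : forall a, d 0 a * (d 0 a)^* = 1.
  move=> a; have := congr1 (fun M : 'M[C]_n => M a a) ht.
  by rewrite td mul_diag_mx !mxE eqxx !mulr1n.
have hF i : Fx i u by rewrite -(hu i); exact: Fix_P.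
pose D k := diag_mx (\row_a (if (a < k)%N then d 0 a else 1) : 'rV[C]_n).
pose S (k : 'I_n) := diag_mx (\row_a (if a == k then d 0 a else 1) : 'rV[C]_n).
have hDu k : unitary (D k).
  by apply: unitary_diag => a; rewrite mxE; case: ifP => _; rewrite ?hd ?conjC1 ?mulr1.
have hS k : @UB R n [set k] (S k).
  split.
    by apply: unitary_diag => a; rewrite mxE; case: ifP => _; rewrite ?hd ?conjC1 ?mulr1.
  move=> a b hab; rewrite !mxE; case: (eqVneq a b) => [eab|nab].
    rewrite mulr1n; case: (eqVneq a k) => // ak.
    by move: hab; rewrite -eab ak in_set1 eqxx.
  by rewrite mulr0n.
have hDS k (hk : (k < n)%N) : D k.+1 = D k *m S (Ordinal hk).
  rewrite mulmx_diag; congr diag_mx; apply/matrixP => z a; rewrite !mxE.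
  case: (ltngtP a k) => h.
  - rewrite ltnS (ltnW h); case: eqP => [e|_]; last by rewrite mulr1.
    by move: h; rewrite e /= ltnn.
  - rewrite ltnS leqNgt h /= mul1r; case: eqP => // e.
    by move: h; rewrite e /= ltnn.
  - rewrite ltnS h leqnn mul1r; case: eqP => // ne.
    by case: ne; apply: val_inj.
have : forall k, (k <= n)%N -> rho (D k) *m u = u.
  elim => [_|k IH hk].
    have -> : D 0%N = 1%:M.
      by apply/matrixP => a b; rewrite !mxE; case: (a == b).
    by case: hrho => _ -> _ _; rewrite mul1mx.
  rewrite (hDS k hk) (rhoM hrho (hDu k) (UB_unitary (hS _))) -mulmxA.
  by rewrite (hF _ _ (hS _)) IH // ltnW.
move=> /(_ n (leqnn n)); rewrite td.
have -> : D n = diag_mx d.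
  by congr diag_mx; apply/matrixP => z a; rewrite !mxE ltn_ord (ord1 z).
by [].
Qed.

End Circ.


Section Core.
Variables (k n : nat).
Local Notation M := ('M[C]_k.+1).
Variables (Q : 'I_n -> M) (P : {set 'I_n} -> M) (wc : {set 'I_n} -> C)
  (v : 'cV[C]_k.+1) (ph : C).
Hypotheses (hQa : forall i, adj (Q i) = Q i) (hQi : forall i, Q i * Q i = Q i)
  (hQc : forall i j, Q i * Q j = Q j * Q i)
  (hPa : forall B, adj (P B) = P B) (hPi : forall B, P B * P B = P B)
  (hQP : forall i (B : {set 'I_n}), i \in B -> Q i * P B = P B)
  (hv : forall u, (forall i, Q i *m u = u) -> ip u v = 0)
  (hw : forall B, 0 <= wc B)
  (hph : forall i : 'I_n, ph <= \sum_(B : {set 'I_n} | i \in B) wc B).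

Lemma adjMr (X Y : M) : adj (X * Y) = adj Y * adj X.
Proof. exact: adjM. Qed.
Lemma adj1r : adj (1 : M) = 1.
Proof. exact: adj1. Qed.
Lemma adjBr (X Y : M) : adj (X - Y) = adj X - adj Y.
Proof. exact: adjB. Qed.

Definition Gq i (b : bool) : M := if b then 1 - Q i else Q i.
Definition Cm (X : M) := forall Y : M, (forall j, Y * Q j = Q j * Y) -> X * Y = Y * X.
Definition Good (X : M) := [/\ Cm X, adj X = X & X * X = X].

Lemma Cm_Q (X : M) j : Cm X -> X * Q j = Q j * X.
Proof. by move=> h; apply: h => i; rewrite hQc. Qed.

Lemma Good_G i b : Good (Gq i b).
Proof.
case: b; split => /=.
- by move=> Y hY; rewrite mulrBl mulrBr mul1r mulr1 hY.
- by rewrite adjBr adj1r hQa.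
- by rewrite mulrBl !mulrBr !mul1r !mulr1 hQi subrr subr0.
- by move=> Y hY; rewrite hY.
- exact: hQa.
- exact: hQi.
Qed.

Lemma Good1 : Good 1.
Proof. by split; [move=> Y _; rewrite mul1r mulr1 | exact: adj1r | rewrite mulr1]. Qed.

Lemma GoodM X Y : Good X -> Good Y -> Good (X * Y).
Proof.
case=> cX aX iX [cY aY iY].
have XY : X * Y = Y * X by apply: cX => j; exact: Cm_Q.
split.
- by move=> Z hZ; rewrite -mulrA cY // mulrA cX // mulrA.
- by rewrite adjMr aX aY XY.
- by rewrite mulrA -(mulrA X Y X) -XY mulrA iX -mulrA iY.
Qed.

Definition E (f : {ffun 'I_n -> bool}) : M := \prod_(i < n) Gq i (f i).

Lemma GoodL (f : {ffun 'I_n -> bool}) r : Good (\prod_(j <- r) Gq j (f j)).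
Proof. by apply: big_ind => //; [exact: Good1 | exact: GoodM | move=> i _; exact: Good_G]. Qed.

Lemma GoodE f : Good (E f).
Proof. exact: GoodL. Qed.

Lemma sumE : \sum_f E f = 1.
Proof.
rewrite /E -(bigA_distr_bigA (fun i b => Gq i b)) /=.
by rewrite big1 // => i _; rewrite big_bool /= subrK.
Qed.

Lemma GG i b : Gq i b * Gq i (~~ b) = 0.
Proof.
by case: b => /=; rewrite ?mulrBl ?mulrBr ?mul1r ?mulr1 hQi subrr.
Qed.

Lemma E_kill (f : {ffun 'I_n -> bool}) i : E f * Gq i (~~ f i) = 0.
Proof.
rewrite /E.
have : i \in index_enum 'I_n by rewrite mem_index_enum.
elim: (index_enum 'I_n) => [//|a r IH].
rewrite inE big_cons => /orP [/eqP ai|ir].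
  subst a.
  case: (GoodL f r) => c _ _.
  case: (Good_G i (~~ f i)) => cc _ _.
  rewrite -mulrA c; first by rewrite mulrA GG mul0r.
  by move=> j; exact: (Cm_Q j cc).
by rewrite -mulrA IH ?mulr0.
Qed.


Lemma GGsum i b : Gq i b + Gq i (~~ b) = 1.
Proof. by case: b => /=; rewrite ?subrK // addrC subrK. Qed.

Lemma E_Gi (f : {ffun 'I_n -> bool}) i : E f * Gq i (f i) = E f.
Proof.
rewrite -[in RHS](mulr1 (E f)) -(GGsum i (f i)) mulrDr E_kill addr0 //.
Qed.

Lemma E_orth (f g : {ffun 'I_n -> bool}) : f != g -> E f * E g = 0.
Proof.
move=> fg.
have [i hi] : exists i, f i != g i.
  case: (pickP (fun i => f i != g i)) => [i hi|h]; first by exists i.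
  by case/negP: fg; apply/eqP/ffunP => i; move: (h i) => /negbFE/eqP.
have gi : g i = ~~ f i by case: (f i) (g i) hi => [] [].
case: (GoodE g) => c _ _.
rewrite -(E_Gi g i) c; last by move=> j; case: (Good_G i (g i)) => cc _ _; exact: (Cm_Q j cc).
by rewrite mulrA gi E_kill mul0r.
Qed.

Lemma E_false (f : {ffun 'I_n -> bool}) i : f i = false -> Q i * E f = E f.
Proof.
move=> fi; case: (GoodE f) => c _ _.
have h := E_Gi f i; rewrite fi /= in h.
by rewrite -(Cm_Q i c) h.
Qed.

Definition SB (B : {set 'I_n}) (f : {ffun 'I_n -> bool}) := [exists i in B, f i].

Lemma E_P (f : {ffun 'I_n -> bool}) B : SB B f -> E f * P B = 0.
Proof.
case/existsP => i /andP [iB fi].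
have h := E_kill f i; rewrite fi /= in h.
by rewrite -(hQP iB) mulrA h mul0r.
Qed.

Lemma adj_sum (I : finType) (p : pred I) (F : I -> M) :
  adj (\sum_(x | p x) F x) = \sum_(x | p x) adj (F x).
Proof. by apply: (big_morph _ (fun a b => adjD a b) (adj0 _ _)). Qed.

Lemma P_E (f : {ffun 'I_n -> bool}) B : SB B f -> P B * E f = 0.
Proof.
move=> h; have := congr1 (@adj R k.+1 k.+1) (E_P h).
case: (GoodE f) => _ a _.
by rewrite adjMr hPa a adj0.
Qed.

Definition X B := \sum_(f | SB B f) E f.

Lemma X_idem B : X B * X B = X B.
Proof.
rewrite /X mulr_suml; apply: eq_bigr => f hf.
rewrite mulr_sumr (bigD1 f) //= big1 ?addr0; first by case: (GoodE f).
by move=> g /andP [_ gf]; apply: E_orth; rewrite eq_sym.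
Qed.

Lemma X_adj B : adj (X B) = X B.
Proof. by rewrite /X adj_sum; apply: eq_bigr => f _; case: (GoodE f). Qed.

Lemma XP B : X B * P B = 0.
Proof. by rewrite /X mulr_suml big1 // => f h; apply: E_P. Qed.

Lemma PX B : P B * X B = 0.
Proof. by rewrite /X mulr_sumr big1 // => f h; apply: P_E. Qed.

Lemma ip_proj (Y : M) u : adj Y = Y -> Y * Y = Y -> ip u (Y *m u) = ip (Y *m u) (Y *m u).
Proof.
move=> a i; rewrite -{1}i.
by rewrite -[Y * Y]/(Y *m Y) -mulmxA ipMr a.
Qed.

Lemma ipE_ge0 (f : {ffun 'I_n -> bool}) : 0 <= ip v (E f *m v).
Proof. by case: (GoodE f) => _ a i; rewrite ip_proj // ip_ge0. Qed.

Lemma step1 B : ip v (X B *m v) <= ip v ((1 - P B) *m v).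
Proof.
set Y := 1 - (X B + P B).
have e : 1 - P B = X B + Y by rewrite /Y opprD addrCA !addrA addrK.
rewrite e mulmxDl ipDr lerDl.
have aY : adj Y = Y by rewrite /Y adjBr adjD adj1r X_adj hPa.
have iY : Y * Y = Y.
  have iW : (X B + P B) * (X B + P B) = X B + P B.
    by rewrite mulrDl !mulrDr X_idem XP PX hPi addr0 add0r.
  by rewrite /Y mulrBl !mulrBr !mul1r !mulr1 iW subrr subr0.
by rewrite ip_proj // ip_ge0.
Qed.

Lemma step1' B : ip v (X B *m v) = \sum_(f | SB B f) ip v (E f *m v).
Proof. by rewrite /X mulmx_suml ip_sumr. Qed.

Lemma core : ph * ip v v <= \sum_B wc B * ip v ((1 - P B) *m v).
Proof.
pose e f := ip v (E f *m v).
have sumv : ip v v = \sum_f e f.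
  by rewrite /e -ip_sumr -mulmx_suml sumE mul1mx.
pose f0 : {ffun 'I_n -> bool} := [ffun _ => false].
have ef0 : e f0 = 0.
  have hu : forall i, Q i *m (E f0 *m v) = E f0 *m v.
    by move=> i; rewrite mulmxA [Q i *m _]E_false // ffunE.
  by rewrite /e ipC (hv hu); exact: conjC0.
apply: (le_trans (y := \sum_B wc B * \sum_(f | SB B f) e f)); last first.
  apply: ler_sum => B _; apply: ler_wpM2l => //.
  by rewrite /e -step1'; exact: step1.
have ex : \sum_B wc B * \sum_(f | SB B f) e f = \sum_f e f * \sum_(B | SB B f) wc B.
  transitivity (\sum_B \sum_f (if SB B f then wc B * e f else 0)).
    by apply: eq_bigr => B _; rewrite mulr_sumr big_mkcond.
  rewrite exchange_big; apply: eq_bigr => f _.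
  by rewrite mulr_sumr [RHS]big_mkcond; apply: eq_bigr => B _; case: ifP => // _; rewrite mulrC.
rewrite ex sumv mulr_sumr; apply: ler_sum => f _.
case: (pickP (fun i => f i)) => [i fi|h]; last first.
  have -> : f = f0 by apply/ffunP => i; rewrite ffunE; exact: h.
  by rewrite ef0 mulr0 mul0r.
rewrite mulrC; apply: ler_wpM2l; first exact: ipE_ge0.
apply: (le_trans (hph i)).
rewrite [X in X <= _]big_mkcond [X in _ <= X]big_mkcond; apply: ler_sum => B _.
case: ifP => iB; first by rewrite ifT //; apply/existsP; exists i; rewrite iB.
by case: ifP.
Qed.

End Core.


Lemma sumC (I : finType) (p : pred I) (F : I -> R) :
  (\sum_(i | p i) F i)%:C = \sum_(i | p i) (F i)%:C.
Proof. by apply: (big_morph (fun x : R => x%:C)) => [x y|]; rewrite ?rmorphD ?rmorph0. Qed.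
Lemma c0 (x : R) : 0 <= x -> 0 <= x%:C.
Proof. by move=> h; rewrite -[0 : R[i]]/((0:R)%:C) lecR. Qed.

End Adj.

Theorem lemma3p10 (R : realType) (n m : nat) (w : {set 'I_n} -> R)
  (hw : forall B, 0 <= w B)
  (rho : 'M[R[i]]_n -> 'M[R[i]]_m) (hrho : unitary_rep rho)
  (I : {set 'I_n} -> ('M[R[i]]_n -> R[i]) -> R[i])
  (hI : forall B, haar_integral (@UB R n B) (I B))
  (lam : R[i]) (v : 'cV[R[i]]_m) :
  TorInvPerp rho v -> v != 0 -> laplacian w rho I *m v = lam *: v ->
  (phi w)%:C <= lam.
Proof.
move=> hv vn0 hL.
case: m rho hrho v hv vn0 hL => [|k] rho hrho v hv vn0 hL.
  by rewrite [v]flatmx0 eqxx in vn0.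
pose Q i := avg_op rho (I [set i]).
pose P B := avg_op rho (I B).
have hpos : 0 < ip v v.
  rewrite lt_def ip_ge0 andbT; apply/eqP => h.
  by move/eqP: vn0; apply; exact: ip_eq0 h.
have hLv : ip v (laplacian w rho I *m v) = \sum_B (w B)%:C * ip v ((1 - P B) *m v).
  by rewrite /laplacian mulmx_suml ip_sumr; apply: eq_bigr => B _; rewrite -scalemxAl ipZr.
have hc := @core R k n Q P (fun B => (w B)%:C) v (phi w)%:C
  (fun i => P_adj hrho (hI [set i])) (fun i => P_idem hrho (hI [set i]))
  (Q_comm hrho hI) (fun B => P_adj hrho (hI B)) (fun B => P_idem hrho (hI B))
  (Q_P hrho hI).
have hv' : forall u, (forall i, Q i *m u = u) -> ip u v = 0.
  by move=> u hu; rewrite /ip (hv u (Q_tor hrho hI hu)) mxE.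
have hw' : forall B, 0 <= (w B)%:C by move=> B; apply: c0.
have hph : forall i : 'I_n, (phi w)%:C <= \sum_(B : {set 'I_n} | i \in B) (w B)%:C.
  by move=> i; rewrite -sumC lecR /phi; exact: bigmin_le.
have := hc hv' hw' hph.
by rewrite -hLv hL ipZr ler_pM2r.
Qed.
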